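(* Let $f\in\mathcal{C}$ and let $f^\ast(t):=t f(1/t)$ for $t>0$, extended by $f^\ast(0):=\lim_{t\downarrow0}f^\ast(t)\in(-\infty,\infty]$. Then for all probability measures $P,Q$ on a common measurable space and all $\gamma\in[1,\infty)$, $$D_f(P\|Q)\ \ge\ f^\ast\!\Bigl(1+\tfrac1\gamma E_\gamma(P\|Q)\Bigr) + f^\ast\!\Bigl(\tfrac1\gamma\bigl(1-E_\gamma(P\|Q)\bigr)\Bigr) - f^\ast\!\Bigl(\tfrac1\gamma\Bigr).$$
   Context: $\mathcal{C}$ is the set of convex $f\colon(0,\infty)\to\mathbb{R}$ with $f(1)=0$. For densities $p,q$ of $P,Q$ w.r.t. a dominating measure $\mu$, $D_f(P\|Q):=\int qf(p/q)\,\mathrm{d}\mu$ with conventions $f(0):=\lim_{t\downarrow0}f(t)$, $0f(0/0)=0$, $0f(a/0)=a\lim_{u\to\infty}f(u)/u$ for $a>0$. For $\gamma\ge1$, $E_\gamma(P\|Q):=\sup_U(P(U)-\gamma Q(U))=\int(p-\gamma q)^+\,\mathrm{d}\mu$. *)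

(* Defs.v *)
From HB Require Import structures.
From mathcomp Require Import all_boot all_order all_algebra.
From mathcomp Require Import all_classical all_reals all_analysis.
Set Implicit Arguments. Unset Strict Implicit. Unset Printing Implicit Defensive.
Import Order.TTheory GRing.Theory Num.Theory.
Import numFieldNormedType.Exports.
Local Open Scope classical_set_scope.
Local Open Scope ring_scope.

Definition convex_pos (R : realType) (f : R -> R) : Prop :=
  forall x y t : R, 0 < x -> 0 < y -> 0 <= t <= 1 ->
    f (t * x + (1 - t) * y) <= t * f x + (1 - t) * f y.

Definition classC (R : realType) (f : R -> R) : Prop :=
  convex_pos f /\ f 1 = 0.

Definition f_at0 (R : realType) (f : R -> R) : \bar R :=
  lim ((fun t => (f t)%:E) @ 0^'+).

Definition f_slope_inf (R : realType) (f : R -> R) : \bar R :=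
  lim ((fun u => (f u / u)%:E) @ +oo).

Definition fstar (R : realType) (f : R -> R) (t : R) : \bar R :=
  if 0 < t then (t * f t^-1)%:E
  else lim ((fun s => (s * f s^-1)%:E) @ 0^'+).

Definition fdiv_integrand (R : realType) (f : R -> R) (p q : R) : \bar R :=
  if 0 < q then
    (if 0 < p then (q * f (p / q))%:E else (q%:E * f_at0 f)%E)
  else
    (if 0 < p then (p%:E * f_slope_inf f)%E else 0%E).

(* D_f(P||Q) := \int q f(p/q) dmu for densities p, q w.r.t. mu *)
Definition fdiv (R : realType) (d : measure_display) (T : measurableType d)
  (mu : {measure set T -> \bar R}) (f : R -> R) (p q : T -> R) : \bar R :=
  (\int[mu]_x fdiv_integrand f (p x) (q x))%E.

Definition Egamma (R : realType) (d : measure_display) (T : measurableType d)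
  (P Q : {measure set T -> \bar R}) (gamma : R) : \bar R :=
  ereal_sup [set (P U - gamma%:E * Q U)%E | U in measurable].

(* Main.v *)
Require Import Defs.
From HB Require Import structures.
From mathcomp Require Import all_boot all_order all_algebra.
From mathcomp Require Import all_classical all_reals all_analysis.
From mathcomp Require Import ring lra measurable_realfun.
Import Order.TTheory GRing.Theory Num.Theory.
Import numFieldNormedType.Exports.
Local Open Scope classical_set_scope.
Local Open Scope ring_scope.
Set Implicit Arguments. Unset Strict Implicit.
Section S.
Variable R : realType.
Implicit Types f : R -> R.

Lemma convK f a b c : convex_pos f -> 0 < a -> a < b -> b < c ->
  f b * (c - a) <= f a * (c - b) + f c * (b - a).
Proof.
move=> cf a0 ab bc.
have ca : 0 < c - a by lra.
pose t := (c - b) / (c - a).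
have t01 : 0 <= t <= 1.
  apply/andP; split; first by rewrite /t divr_ge0 //; lra.
  by rewrite /t ler_pdivrMr //; lra.
have := cf a c t a0 (lt_trans a0 (lt_trans ab bc)) t01.
have -> : t * a + (1 - t) * c = b.
  rewrite /t; field; lra.
move=> h.
have : f b * (c - a) <= (t * f a + (1 - t) * f c) * (c - a).
  by rewrite ler_pM2r.
suff -> : (t * f a + (1 - t) * f c) * (c - a) = f a * (c - b) + f c * (b - a) by [].
rewrite /t; field; lra.
Qed.


Lemma slope_le f y x z : convex_pos f -> 0 < y -> y < x -> x < z ->
  (f x - f y) / (x - y) <= (f z - f x) / (z - x).
Proof.
move=> cf y0 yx xz; have := convK cf y0 yx xz => h.
have xy0 : 0 < x - y by lra.
have zx0 : 0 < z - x by lra.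
rewrite ler_pdivrMr // mulrAC ler_pdivlMr //.
nra.
Qed.

Definition sg f x := sup [set (f x - f y) / (x - y) | y in [set y | 0 < y < x]].

Lemma sg_supp f x z : convex_pos f -> 0 < x -> 0 < z ->
  f x + sg f x * (z - x) <= f z.
Proof.
move=> cf x0 z0.
set S := [set (f x - f y) / (x - y) | y in [set y | 0 < y < x]].
have ub w : x < w -> ubound S ((f w - f x) / (w - x)).
  move=> xw _ [y /= /andP[y0 yx] <-]; exact: slope_le.
have hS : has_sup S.
  split; first by exists ((f x - f (x/2)) / (x - x/2)), (x/2) => //=; apply/andP; split; lra.
  by exists ((f (x+1) - f x) / (x + 1 - x)); apply: ub; lra.
have [zx|xz|<-] := ltgtP z x; last by rewrite subrr mulr0 addr0.
- have : (f x - f z) / (x - z) <= sg f x.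
    apply: sup_upper_bound => //; exists z => //=; apply/andP; split; lra.
  have xz0 : 0 < x - z by lra.
  rewrite ler_pdivrMr // => h; nra.
- have : sg f x <= (f z - f x) / (z - x).
    apply: ge_sup; [exact: hS.1 | exact: ub].
  have zx0 : 0 < z - x by lra.
  rewrite ler_pdivlMr // => h; nra.
Qed.


Lemma slope_le2 f a b c : convex_pos f -> 0 < a -> a < b -> b < c ->
  (f c - f a) / (c - a) <= (f c - f b) / (c - b).
Proof.
move=> cf a0 ab bc; have := convK cf a0 ab bc => h.
have ca : 0 < c - a by lra.
have cb : 0 < c - b by lra.
rewrite ler_pdivrMr // mulrAC ler_pdivlMr //.
nra.
Qed.

Lemma slope_mono f a b c d : convex_pos f -> 0 < a -> a < b -> b <= c -> c < d ->
  (f b - f a) / (b - a) <= (f d - f c) / (d - c).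
Proof.
move=> cf a0 ab bc cd.
apply: (le_trans (slope_le cf a0 ab (le_lt_trans bc cd))).
have [bc'|cb] := ltP b c; last first.
  have -> : c = b by apply/eqP; rewrite eq_le cb bc.
  exact: lexx.
apply: slope_le2 => //; lra.
Qed.

Lemma convex_cvg0 f : convex_pos f -> cvg ((fun t => (f t)%:E) @ 0^'+).
Proof.
move=> cf.
have [[e e0 He]|N] := pselect (exists2 e, 0 < e &
    forall s t, 0 < s -> s < t -> t < e -> f t <= f s).
- apply: nonincreasing_at_right_is_cvge.
  near=> x => s t; rewrite !in_itv /= => /andP[s0 sx] /andP[t0 tx] st.
  rewrite lee_fin; have [st'|ts] := ltP s t; last first.
    have -> : t = s by apply/eqP; rewrite eq_le st ts.
    exact: lexx.
  apply: He => //; apply: (lt_le_trans tx); near: x; exact: nbhs_right_le.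
- apply: nondecreasing_at_right_is_cvge.
  near=> x => s t; rewrite !in_itv /= => /andP[s0 sx] /andP[t0 tx] st.
  rewrite lee_fin; rewrite leNgt; apply/negP => fts.
  have [st'|ts] := ltP s t; last first.
    move: fts; have -> : t = s by apply/eqP; rewrite eq_le st ts.
    by rewrite ltxx.
  apply: N; exists s => // s' t' s'0 s't' t's.
  have := slope_mono cf s'0 s't' (ltW t's) st'.
  have : (f t - f s) / (t - s) < 0.
    by rewrite pmulr_llt0 ?invr_gt0; lra.
  move=> h1 h2; have := le_lt_trans h2 h1.
  rewrite pmulr_llt0 ?invr_gt0; lra.
Unshelve. all: by end_near. Qed.


Lemma persp_convex f : convex_pos f -> convex_pos (fun s => s * f s^-1).
Proof.
move=> cf x y t x0 y0 /andP[t0 t1].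
set s := t * x + (1 - t) * y.
have s0 : 0 < s.
  rewrite /s; have [->|tp] := eqVneq t 0; first by rewrite mul0r add0r subr0 mul1r.
  have tp' : 0 < t by rewrite lt_def tp t0.
  apply: (lt_le_trans (mulr_gt0 tp' x0)); rewrite lerDl mulr_ge0 //; lra.
pose l := t * x / s.
have l01 : 0 <= l <= 1.
  apply/andP; split; first by rewrite /l divr_ge0 // ?mulr_ge0 // ltW.
  rewrite /l ler_pdivrMr // mul1r /s lerDl mulr_ge0 //; lra.
have := cf x^-1 y^-1 l; rewrite !invr_gt0 => /(_ x0 y0 l01).
have -> : l * x^-1 + (1 - l) * y^-1 = s^-1.
  rewrite /l /s; field; by rewrite -/s (gt_eqF s0) (gt_eqF y0) (gt_eqF x0).
move=> h.
have : s * f s^-1 <= s * (l * f x^-1 + (1 - l) * f y^-1) by rewrite ler_pM2l.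
suff -> : s * (l * f x^-1 + (1 - l) * f y^-1) = t * (x * f x^-1) + (1 - t) * (y * f y^-1) by [].
rewrite /l /s; field; by rewrite -/s (gt_eqF s0).
Qed.

Lemma inv_cvg : (fun u : R => u^-1) @ +oo --> (0:R)^'+.
Proof.
move=> A /=. rewrite /at_right /within /= => -[e /= e0 eA].
exists e^-1; split; first by rewrite num_real.
move=> x ex /=.
have x0 : 0 < x by apply: lt_trans ex; rewrite invr_gt0.
apply: eA; last by rewrite invr_gt0.
rewrite /= sub0r normrN gtr0_norm ?invr_gt0 //.
by rewrite -(invrK e) ltf_pV2 ?posrE ?invr_gt0.
Qed.

Lemma slope_inf_cvg f : convex_pos f -> cvg ((fun u => (f u / u)%:E) @ +oo).
Proof.
move=> cf; have /cvg_ex [l hl] := convex_cvg0 (persp_convex cf).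
apply/cvg_ex; exists l.
have := cvg_comp _ _ inv_cvg hl.
suff -> : (fun u => (f u / u)%:E) = (fun s : R => (s * f s^-1)%:E) \o (fun u : R => u^-1) by [].
by apply: funext => u /=; rewrite invrK mulrC.
Qed.

Lemma slope_inf_ge f a b : convex_pos f -> (forall t, 0 < t -> a * t + b <= f t) ->
  (a%:E <= f_slope_inf f)%E.
Proof.
move=> cf hf; apply/lee_subgt0Pr => e e0; rewrite /f_slope_inf.
apply: lime_ge; first exact: slope_inf_cvg.
near=> u.
have u0 : 0 < u by near: u; apply: nbhs_pinfty_gt; rewrite num_real.
have ub : `|b| / e < u by near: u; apply: nbhs_pinfty_gt; rewrite num_real.
rewrite -EFinB lee_fin ler_pdivlMr //.
have := hf u u0; have := ler_norm (-b); rewrite normrN => hb.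
move: ub; rewrite ltr_pdivrMr // => ub hfu.
nra.
Unshelve. all: by end_near. Qed.

Lemma at0_ge f a b : convex_pos f -> (forall t, 0 < t -> a * t + b <= f t) ->
  (b%:E <= f_at0 f)%E.
Proof.
move=> cf hf; apply/lee_subgt0Pr => e e0; rewrite /f_at0.
apply: lime_ge; first exact: convex_cvg0.
have ea : 0 < e / (`|a| + 1) by rewrite divr_gt0 // ltr_wpDl.
near=> t.
have t0 : 0 < t by near: t; apply: nbhs_right_gt.
have te : t < e / (`|a| + 1) by near: t; apply: nbhs_right_lt.
rewrite -EFinB lee_fin.
have := hf t t0; have := ler_norm (-a); rewrite normrN => ha.
move: te; rewrite ltr_pdivlMr ?ltr_wpDl // => te hft.
nra.
Unshelve. all: by end_near. Qed.

Lemma fstar0_le f M : convex_pos f ->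
  (forall s, 0 < s -> s < 1 -> s * f s^-1 - s * f 1 <= M * (1 - s)) ->
  (fstar f 0 <= M%:E)%E.
Proof.
move=> cf hf; rewrite /fstar ltxx.
apply/lee_addgt0Pr => e e0.
apply: lime_le; first exact: convex_cvg0 (persp_convex cf).
have ea : 0 < e / (`|M| + `|f 1| + 1) by rewrite divr_gt0 // ltr_wpDl.
near=> s.
have s0 : 0 < s by near: s; apply: nbhs_right_gt.
have s1 : s < 1 by near: s; apply: nbhs_right_lt.
have se : s < e / (`|M| + `|f 1| + 1) by near: s; apply: nbhs_right_lt.
rewrite -EFinD lee_fin.
have := hf s s0 s1; have := ler_norm (-M); have := ler_norm (f 1); rewrite normrN => h1 h2.
move: se; rewrite ltr_pdivlMr ?ltr_wpDl ?addr_ge0 // => se h.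
have h3 : 0 <= s * (`|M| + M) by apply: mulr_ge0; [exact: ltW|lra].
have h4 : 0 <= s * (`|f 1| - f 1) by apply: mulr_ge0; [exact: ltW|lra].
nra.
Unshelve. all: by end_near. Qed.

Lemma integrand_ge f a b p q : convex_pos f -> (forall t, 0 < t -> a * t + b <= f t) ->
  0 <= p -> 0 <= q -> ((a * p + b * q)%:E <= fdiv_integrand f p q)%E.
Proof.
move=> cf hs p0 q0; rewrite /fdiv_integrand.
have [qp|qn] := ltP 0 q; have [pp|pn] := ltP 0 p.
- rewrite lee_fin; have h := hs (p / q) (divr_gt0 pp qp).
  have : q * (a * (p / q) + b) <= q * f (p / q) by rewrite ler_pM2l.
  suff -> : q * (a * (p / q) + b) = a * p + b * q by [].
  by field; rewrite gt_eqF.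
- have -> : p = 0 by apply/eqP; rewrite eq_le pn p0.
  rewrite mulr0 add0r mulrC EFinM; apply: lee_wpmul2l; first by rewrite lee_fin.
  exact: at0_ge hs.
- have -> : q = 0 by apply/eqP; rewrite eq_le qn q0.
  rewrite mulr0 addr0 mulrC EFinM; apply: lee_wpmul2l; first by rewrite lee_fin ltW.
  exact: slope_inf_ge hs.
- have -> : q = 0 by apply/eqP; rewrite eq_le qn q0.
  have -> : p = 0 by apply/eqP; rewrite eq_le pn p0.
  by rewrite !mulr0 addr0.
Qed.

End S.

Lemma le_integral_nm (R : realType) (d : measure_display) (T : measurableType d)
  (mu : {measure set T -> \bar R}) (G F : T -> \bar R) :
  (forall x, (G x <= F x)%E) -> (\int[mu]_x G x <= \int[mu]_x F x)%E.
Proof.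
move=> GF; rewrite /integral.
apply: leeB; apply: ereal_sup_le => _ [h /= hh <-]; exists h => //= x.
- apply: (le_trans (hh x)); rewrite !funeposE !patchE in_setT.
  by apply: le_max2 => //; apply: GF.
- apply: (le_trans (hh x)); rewrite !funenegE !patchE in_setT.
  by apply: le_max2 => //; rewrite leeN2.
Qed.

Section M.
Context (R : realType) (d : measure_display) (T : measurableType d) (mu : {measure set T -> \bar R}).
Variables (P : probability T R) (p : T -> R).
Hypotheses (mp : measurable_fun setT p) (p0 : forall x, 0 <= p x)
  (hP : forall A, measurable A -> P A = (\int[mu]_(x in A) (p x)%:E)%E).

Lemma PDE D : measurable D -> P D = (fine (P D))%:E.
Proof. by move=> mD; rewrite fineK // fin_num_measure. Qed.

Lemma dens_int D : measurable D -> mu.-integrable D (EFin \o p).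
Proof.
move=> mD; apply/integrableP; split.
  by apply/measurable_EFinP; exact: measurable_funS mp.
under eq_integral => x _ do rewrite /= ger0_norm //.
by rewrite -hP // PDE // ltry.
Qed.

Lemma fineE D : measurable D -> (fine (P D))%:E = P D.
Proof. by move=> mD; rewrite -PDE. Qed.

Lemma PD_ge0 D : measurable D -> 0 <= fine (P D).
Proof. by move=> mD; rewrite fine_ge0. Qed.

Lemma PD_le1 D : measurable D -> fine (P D) <= 1.
Proof. by move=> mD; rewrite -lee_fin -PDE // probability_le1. Qed.

Lemma PC D : measurable D -> fine (P (~` D)) = 1 - fine (P D).
Proof. by move=> mD; rewrite probability_setC // [P D]PDE // -EFinB. Qed.

End M.

Section M2.
Context (R : realType) (d : measure_display) (T : measurableType d) (mu : {measure set T -> \bar R}).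
Variables (P Q : probability T R) (p q : T -> R).
Hypotheses (mp : measurable_fun setT p) (p0 : forall x, 0 <= p x)
  (hP : forall A, measurable A -> P A = (\int[mu]_(x in A) (p x)%:E)%E).
Hypotheses (mq : measurable_fun setT q) (q0 : forall x, 0 <= q x)
  (hQ : forall A, measurable A -> Q A = (\int[mu]_(x in A) (q x)%:E)%E).

Lemma lin_int D a b : measurable D ->
  (\int[mu]_(x in D) (a * p x + b * q x)%:E = (a * fine (P D) + b * fine (Q D))%:E)%E.
Proof.
move=> mD.
under eq_integral do rewrite EFinD !EFinM.
have ip := dens_int mp p0 hP mD; have iq := dens_int mq q0 hQ mD.
rewrite integralD //; [|exact: integrableZl|exact: integrableZl].
rewrite integralZl // integralZl //.
by rewrite -hP // -hQ // [P D]PDE // [Q D]PDE // -!EFinM -EFinD.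
Qed.


Lemma split_fine (P0 : probability T R) U B : measurable U -> measurable B ->
  fine (P0 U) = fine (P0 (U `\` B)) + fine (P0 (U `&` B)).
Proof.
move=> mU mB; rewrite (measureDI P0 mU mB) fineD //; apply: fin_num_measure => //.
  exact: measurableD. exact: measurableI.
Qed.

Variable gamma : R.
Hypothesis g1 : 1 <= gamma.

Lemma cmp1 B : measurable B -> (forall x, B x -> p x <= gamma * q x) ->
  fine (P B) <= gamma * fine (Q B).
Proof.
move=> mB h; rewrite -lee_fin EFinM !fineE // hP // hQ //.
rewrite -ge0_integralZl_EFin //; last 3 first.
- by move=> x _; rewrite lee_fin.
- by apply/measurable_EFinP; exact: measurable_funS mq.
- exact: le_trans ler01 g1.
apply: (@ge0_le_integral _ _ _ mu B mB (fun x => (p x)%:E) (fun x => (gamma%:E * (q x)%:E)%E)).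
- by move=> x _; rewrite lee_fin.
- by apply/measurable_EFinP; exact: measurable_funS mp.
- rewrite (_ : (fun x => _) = EFin \o (fun x => gamma * q x)); last by apply: funext => x; rewrite /= EFinM.
  apply/measurable_EFinP; apply: measurable_funM => //; exact: measurable_funS mq.
- by move=> x Bx; rewrite -EFinM lee_fin h.
Qed.

Lemma cmp2 B : measurable B -> (forall x, B x -> gamma * q x <= p x) ->
  gamma * fine (Q B) <= fine (P B).
Proof.
move=> mB h; rewrite -lee_fin EFinM !fineE // hP // hQ //.
rewrite -ge0_integralZl_EFin //; last 3 first.
- by move=> x _; rewrite lee_fin.
- by apply/measurable_EFinP; exact: measurable_funS mq.
- exact: le_trans ler01 g1.
apply: (@ge0_le_integral _ _ _ mu B mB (fun x => (gamma%:E * (q x)%:E)%E) (fun x => (p x)%:E)).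
- by move=> x _; rewrite -EFinM lee_fin mulr_ge0 // (le_trans ler01 g1).
- rewrite (_ : (fun x => _) = EFin \o (fun x => gamma * q x)); last by apply: funext => x; rewrite /= EFinM.
  apply/measurable_EFinP; apply: measurable_funM => //; exact: measurable_funS mq.
- by apply/measurable_EFinP; exact: measurable_funS mp.
- by move=> x Bx; rewrite -EFinM lee_fin h.
Qed.

Definition Aset := [set x | gamma * q x < p x].

Lemma mAset : measurable Aset.
Proof.
have := @measurable_lte _ _ R setT measurableT (EFin \o (fun x => gamma * q x)) (EFin \o p).
rewrite setTI; apply.
- apply/measurable_EFinP; apply: measurable_funM => //.
- by apply/measurable_EFinP.
Qed.

Lemma Egamma_le : (Egamma P Q gamma <= (fine (P Aset) - gamma * fine (Q Aset))%:E)%E.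
Proof.
apply: ge_ereal_sup => _ [U mU <-].
rewrite -[X in (X - _)%E](fineE P mU) -[X in (_ * X)%E](fineE Q mU) -EFinM -EFinB lee_fin.
rewrite (split_fine P mU mAset) (split_fine Q mU mAset).
rewrite (split_fine P mAset mU) (split_fine Q mAset mU) setIC.
have h1 := cmp1 (measurableD mU mAset) (fun x hx => ltac:(move: hx => [_ hx]; rewrite leNgt; apply/negP => h; exact: hx h)).
have h2 := cmp2 (measurableD mAset mU) (fun x hx => ltac:(move: hx => [hx _]; exact: ltW hx)).
lra.
Qed.

Lemma Egamma_ge0 : (0 <= Egamma P Q gamma)%E.
Proof.
apply: le_trans (ereal_sup_ubound _); last by exists set0 => //.
by rewrite !measure0 mule0 sube0.
Qed.

Variable f : R -> R.
Hypothesis cf : convex_pos f.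

Lemma bound a1 b1 a2 b2 :
  (forall t, 0 < t -> a1 * t + b1 <= f t) -> (forall t, 0 < t -> a2 * t + b2 <= f t) ->
  ((a2 * fine (P Aset) + b2 * fine (Q Aset) + (a1 * (1 - fine (P Aset)) + b1 * (1 - fine (Q Aset))))%:E
    <= fdiv mu f p q)%E.
Proof.
move=> s1 s2.
pose g := fun x => (if gamma * q x < p x then a2 * p x + b2 * q x else a1 * p x + b1 * q x).
apply: (@le_trans _ _ (\int[mu]_x (g x)%:E)%E); last first.
  apply: le_integral_nm => x; rewrite /g; case: ifP => _; exact: integrand_ge.
have mg : measurable_fun setT (fun x => (g x)%:E).
  apply/measurable_EFinP; apply: measurable_fun_ifT.
  - by apply: measurable_fun_ltr => //; apply: measurable_funM.
  - by apply: measurable_funD; apply: measurable_funM.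
  - by apply: measurable_funD; apply: measurable_funM.
have mA := mAset; have mAC : measurable (~` Aset) by apply: measurableC.
rewrite -(setUv Aset) integral_setU //; last 2 first.
- by rewrite setUv.
- by apply/disj_setPCl.
rewrite (@eq_integral _ _ _ mu Aset (fun x => (a2 * p x + b2 * q x)%:E)); last first.
  by move=> x; rewrite inE /g => hx; rewrite hx.
rewrite (@eq_integral _ _ _ mu (~` Aset) (fun x => (a1 * p x + b1 * q x)%:E)); last first.
  by move=> x; rewrite inE /g => hx; rewrite ifF //; apply/negP.
rewrite !lin_int //.
by rewrite !PC // -EFinD.
Qed.

End M2.

Theorem theorem5 (R : realType) (f : R -> R) (d : measure_display)
  (T : measurableType d) (mu : {measure set T -> \bar R})
  (P Q : probability T R) (p q : T -> R) (gamma : R) :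
  classC f ->
  measurable_fun setT p -> measurable_fun setT q ->
  (forall x, 0 <= p x) -> (forall x, 0 <= q x) ->
  (forall A, measurable A -> P A = (\int[mu]_(x in A) (p x)%:E)%E) ->
  (forall A, measurable A -> Q A = (\int[mu]_(x in A) (q x)%:E)%E) ->
  1 <= gamma ->
  let E := fine (Egamma P Q gamma) in
  (fstar f (1 + E / gamma) + fstar f ((1 - E) / gamma) - fstar f gamma^-1
     <= fdiv mu f p q)%E.
Proof.
move=> [cf f1] mp mq p0 q0 hP hQ g1; cbv zeta; set E := fine (Egamma P Q gamma).
have g0 : 0 < gamma by apply: lt_le_trans g1; exact: ltr01.
have bnd := bound mp p0 hP mq q0 hQ gamma cf.
have mA : measurable (Aset p q gamma) by exact: mAset.
move: bnd; set A := Aset p q gamma => bnd.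
have PA0 := PD_ge0 P mA; have PA1 := PD_le1 P mA.
have QA0 := PD_ge0 Q mA; have QA1 := PD_le1 Q mA.
have Eg0 : (0 <= Egamma P Q gamma)%E by apply: Egamma_ge0.
have Egl := Egamma_le mp p0 hP mq q0 hQ g1.
rewrite -/A in Egl PA0 PA1 QA0 QA1.
set PA := fine (P A) in PA0 PA1 Egl bnd.
set QA := fine (Q A) in QA0 QA1 Egl bnd.
have Eeq : Egamma P Q gamma = E%:E.
  rewrite /E; move: Eg0 Egl; case: (Egamma P Q gamma) => //.
have E0 : 0 <= E by rewrite -lee_fin -Eeq.
have EE : E <= PA - gamma * QA by rewrite -lee_fin -Eeq.
have E1 : E <= 1.
  have : 0 <= gamma * QA by rewrite mulr_ge0 // ltW.
  lra.
have w0 : 0 < gamma^-1 by rewrite invr_gt0.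
have wg : gamma^-1 * gamma = 1 by rewrite mulVf // gt_eqF.
have w1 : gamma^-1 <= 1 by rewrite invf_le1.
set w := gamma^-1 in w0 wg w1 *.
have hQA : QA = w * (gamma * QA) by rewrite mulrA wg mul1r.
move: EE; set G := gamma * QA => EE.
have G0 : 0 <= G by rewrite mulr_ge0 // ltW.
have u0 : 0 < 1 + E * w by rewrite ltr_wpDr // mulr_ge0 // ltW.
set u := 1 + E * w in u0 *.
have t10 : 0 < u^-1 by rewrite invr_gt0.
set t1 := u^-1 in t10.
set a1 := sg f t1; set b1 := f t1 - a1 * t1.
have s1 : forall t, 0 < t -> a1 * t + b1 <= f t.
  by move=> t t0; have := sg_supp cf t10 t0; rewrite /b1 -/a1; lra.
have hu : u * f t1 = a1 + b1 * u.
  by rewrite /b1 /t1; field; rewrite gt_eqF.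
have fu : fstar f u = (u * f t1)%:E by rewrite /fstar u0.
have fw : fstar f w = (w * f gamma)%:E by rewrite /fstar w0 /w invrK.
have S1 : a1 + b1 * w <= w * f gamma.
  have := ler_wpM2l (ltW w0) (s1 gamma g0).
  suff -> : w * (a1 * gamma + b1) = a1 + b1 * w by [].
  by rewrite mulrDr mulrA (mulrC w a1) -mulrA wg mulr1 mulrC.
rewrite fu fw.
have [Elt|Ege] := ltP E 1.
- have v0 : 0 < (1 - E) * w by rewrite mulr_gt0 // subr_gt0.
  set v := (1 - E) * w in v0 *.
  have t20 : 0 < v^-1 by rewrite invr_gt0.
  set t2 := v^-1 in t20.
  set a2 := sg f t2; set b2 := f t2 - a2 * t2.
  have s2 : forall t, 0 < t -> a2 * t + b2 <= f t.
    by move=> t t0; have := sg_supp cf t20 t0; rewrite /b2 -/a2; lra.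
  have hv : v * f t2 = a2 + b2 * v.
    by rewrite /b2 /t2; field; rewrite gt_eqF.
  have fv : fstar f v = (v * f t2)%:E by rewrite /fstar v0.
  have S2 : a2 + b2 * w <= w * f gamma.
    have := ler_wpM2l (ltW w0) (s2 gamma g0).
    suff -> : w * (a2 * gamma + b2) = a2 + b2 * w by [].
    by rewrite mulrDr mulrA (mulrC w a2) -mulrA wg mulr1 mulrC.
  have vu : v <= u.
    rewrite /v /u; have : 0 <= E * w by rewrite mulr_ge0 // ltW.
    lra.
  have t12 : t1 <= t2 by rewrite /t1 /t2 lef_pV2.
  have hb : b2 <= b1.
    have [t12'|t21] := ltP t1 t2; last first.
      have e : t2 = t1 by apply/eqP; rewrite eq_le t21 t12.
      by rewrite /b2 /b1 /a2 /a1 e.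
    have S3 := s2 t1 t10; have S4 := s1 t2 t20.
    rewrite /b1 /b2 in S3 S4 *.
    nra.
  have H1 : 0 <= w * ((b1 - b2) * (PA - G - E)) by apply: mulr_ge0; [exact: ltW w0| apply: mulr_ge0; lra].
  have H2 : 0 <= PA * (w * f gamma - a1 - b1 * w) by apply: mulr_ge0; lra.
  have H3 : 0 <= (1 - PA) * (w * f gamma - a2 - b2 * w) by apply: mulr_ge0; lra.
  have key : u * f t1 + v * f t2 - w * f gamma <= a2 * PA + b2 * QA + (a1 * (1 - PA) + b1 * (1 - QA)).
    rewrite hu hv hQA -/G /u /v.
    nra.
  rewrite fv; apply: le_trans (bnd a1 b1 a2 b2 s1 s2).
  rewrite -lee_fin EFinB EFinD in key.
  exact: key.
- have E1e : E = 1 by apply/eqP; rewrite eq_le E1 Ege.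
  have -> : (1 - E) * w = 0 by rewrite E1e subrr mul0r.
  have PAe : PA = 1 by lra.
  have Ge : G = 0 by lra.
  have DB : forall s, 0 < s -> s < 1 ->
      ((a1 + b1 * u + sg f s^-1 - w * f gamma)%:E <= fdiv mu f p q)%E.
    move=> s s0 s1'.
    have t20 : 0 < s^-1 by rewrite invr_gt0.
    set t2 := s^-1 in t20 *.
    set a2 := sg f t2; set b2 := f t2 - a2 * t2.
    have s2 : forall t, 0 < t -> a2 * t + b2 <= f t.
      by move=> t t0; have := sg_supp cf t20 t0; rewrite /b2 -/a2; lra.
    apply: le_trans (bnd a1 b1 a2 b2 s1 s2).
    rewrite lee_fin hQA -/G PAe Ge /u E1e.
    lra.
  case hD : (fdiv mu f p q) => [Dr| |]; last first.
  + have h12 : 0 < (1:R)/2 by lra.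
    have h12' : (1:R)/2 < 1 by lra.
    have := DB _ h12 h12'.
    by rewrite hD leeNy_eq.
  + by rewrite leey.
  rewrite hD in DB.
  set M := Dr - u * f t1 + w * f gamma.
  have hM : (fstar f 0 <= M%:E)%E.
    apply: (@fstar0_le R f M cf) => s s0 s1'.
    have := DB s s0 s1'; rewrite lee_fin => h.
    have t20 : 0 < s^-1 by rewrite invr_gt0.
    have := ler_wpM2l (ltW s0) (sg_supp cf t20 ltr01).
    have -> : s * (f s^-1 + sg f s^-1 * (1 - s^-1)) = s * f s^-1 + sg f s^-1 * (s - 1).
      by field; rewrite gt_eqF.
    move=> h2.
    have h3 : sg f s^-1 <= M by rewrite /M hu; lra.
    have h4 : 0 <= (M - sg f s^-1) * (1 - s) by apply: mulr_ge0; lra.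
    nra.
  apply: le_trans (leeB (leeD (lexx _) hM) (lexx _)) _.
  have : ((u * f t1 + M - w * f gamma)%:E <= Dr%:E)%E by rewrite lee_fin /M; lra.
  by rewrite EFinB EFinD.
Qed.
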